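(* Let $\mathcal F$ be a sheaf of finite-dimensional $\mathbb F$-vector spaces on a digraph $G$ and $\pi\colon G[\mathbb Z]\to G$ the universal Abelian covering. Then $h_1^{\rm twist}(\mathcal F)\neq0$ if and only if $H_1^\oplus(\pi^*\mathcal F)\neq0$. Moreover, if so, there is a nonzero $w\in H_1^\oplus(\pi^*\mathcal F)$ supported on edges of $G[\mathbb Z_{\ge0}]$, i.e. on edges $(e,n)$ with $n\in\mathbb Z_{\ge0}^{E_G}$.
   Context: A digraph $G$ has finite sets $V_G,E_G$ and tail/head maps $t_G,h_G$. A sheaf $\mathcal F$: finite-dimensional vector spaces $\mathcal F(P)$, $P\in V_G\sqcup E_G$, linear maps $\mathcal F(t,e)\colon\mathcal F(e)\to\mathcal F(t_Ge)$, $\mathcal F(h,e)\colon\mathcal F(e)\to\mathcal F(h_Ge)$; the same definition is used for sheaves on locally finite infinite digraphs. Twisting: with independent indeterminates $\psi(e)$, $e\in E_G$, $\mathcal F^\psi$ has values $\mathcal F(P)\otimes\mathbb F(\psi)$, head maps $\mathcal F(h,e)$, tail maps $\psi(e)\mathcal F(t,e)$; $h_1^{\rm twist}(\mathcal F)$ is the $\mathbb F(\psi)$-dimension of $\ker(d_h-d_t)$ on $\bigoplus_e\mathcal F^\psi(e)\to\bigoplus_v\mathcal F^\psi(v)$, where $d_h$ (resp. $d_t$) sends the summand of $e$ to that of $h_Ge$ (resp. $t_Ge$) via the head (resp. tail) map. The universal Abelian covering $G[\mathbb Z]$ has $V=V_G\times\mathbb Z^{E_G}$, $E=E_G\times\mathbb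 Z^{E_G}$, head $(e,n)\mapsto(h_Ge,n)$, tail $(e,n)\mapsto(t_Ge,n+\delta_e)$ with $\delta_e$ the indicator of $e$; $\pi$ is projection to the first coordinate, and $G[\mathbb Z_{\ge0}]$ is the subgraph with $n\in\mathbb Z_{\ge0}^{E_G}$. The pullback $\pi^*\mathcal F$ has values $\mathcal F(\pi(P))$ and restriction maps $\mathcal F(h,\pi(e)),\mathcal F(t,\pi(e))$. For a sheaf $\mathcal H$ on a locally finite infinite digraph, $H_1^\oplus(\mathcal H)$ is the kernel of $d=d_h-d_t\colon\bigoplus_e\mathcal H(e)\to\bigoplus_v\mathcal H(v)$ (finitely supported elements). *)

(* Defs.v *)
From HB Require Import structures.
From mathcomp Require Import all_boot all_order all_algebra.
From mathcomp Require Import fraction.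
Set Implicit Arguments. Unset Strict Implicit. Unset Printing Implicit Defensive.
Import GRing.Theory.
Local Open Scope ring_scope.

Record digraph := Digraph {
  vert : finType; edge : finType;
  tl : edge -> vert; hd : edge -> vert }.

(** A sheaf of finite-dimensional F-vector spaces on a digraph G.
    F(P) = F^(dim P) (row vectors); restriction maps are matrices acting
    on row vectors: x |-> x *m rt e  maps F(e) -> F(t e). *)
Record sheaf (F : fieldType) (G : digraph) := Sheaf {
  dV : vert G -> nat;
  dE : edge G -> nat;
  rt : forall e, 'M[F]_(dE e, dV (tl e));
  rh : forall e, 'M[F]_(dE e, dV (hd e)) }.

Definition mxnat (R : nmodType) m n (A : 'M[R]_(m, n)) (i j : nat) : R :=
  match (insub i : option 'I_m), (insub j : option 'I_n) with
  | Some i', Some j' => A i' j'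
  | _, _ => 0
  end.

Section SheafMaps.
Variables (F : fieldType) (G : digraph) (S : sheaf F G).

Definition resh (e : edge G) (v : vert G) : 'M[F]_(dE S e, dV S v) :=
  \matrix_(a, b) (if hd e == v then mxnat (rh S e) a b else 0).
Definition rest (e : edge G) (v : vert G) : 'M[F]_(dE S e, dV S v) :=
  \matrix_(a, b) (if tl e == v then mxnat (rt S e) a b else 0).
End SheafMaps.

Fixpoint mpoly (F : fieldType) (n : nat) : idomainType :=
  match n with 0 => F | k.+1 => {poly (mpoly F k)} end.

Fixpoint mconst (F : fieldType) (n : nat) : F -> mpoly F n :=
  match n return F -> mpoly F n with
  | 0 => fun x => x
  | k.+1 => fun x => (mconst k x)%:P
  end.

Fixpoint mvar (F : fieldType) (n : nat) : 'I_n -> mpoly F n :=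
  match n return 'I_n -> mpoly F n with
  | 0 => fun _ => 0
  | k.+1 => fun i => match unlift ord_max i with
                    | Some j => (mvar F j)%:P
                    | None => 'X
                    end
  end.

Section Twist.
Variables (F : fieldType) (G : digraph) (S : sheaf F G).

Definition Fpsi : fieldType := {fraction (mpoly F #|edge G|)}.
Definition iotaF (x : F) : Fpsi := tofrac (mconst #|edge G| x).
Definition psi (e : edge G) : Fpsi := tofrac (mvar F (enum_rank e)).

Definition ecoord := {e : edge G & 'I_(dE S e)}.
Definition vcoord := {v : vert G & 'I_(dV S v)}.

(** matrix of d_h - d_t on the twisted sheaf (row-vector convention) *)
Definition twist_bd : 'M[Fpsi]_(#|{: ecoord}|, #|{: vcoord}|) :=
  \matrix_(i, j)
    (let: ea := enum_val i in let: vb := enum_val j in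
     iotaF (resh S (tag ea) (tag vb) (tagged ea) (tagged vb))
     - psi (tag ea) * iotaF (rest S (tag ea) (tag vb) (tagged ea) (tagged vb))).

Definition h1_twist : nat := \rank (kermx twist_bd).

(** Chains on the universal Abelian covering G[Z] with coefficients in
    pi^* F: a value in F(e) for each edge (e, n), n in Z^{E_G}. *)
Definition cover_chain := forall e : edge G, {ffun edge G -> int} -> 'rV[F]_(dE S e).

Definition delta (e : edge G) : {ffun edge G -> int} := [ffun x => ((x == e) : nat)%:Z].

Definition fin_supp (w : cover_chain) : Prop :=
  exists s : seq (edge G * {ffun edge G -> int}),
    forall e n, w e n != 0 -> (e, n) \in s.

(** d w = 0, where (d w)(v,n) = sum over edges (e,n) with head (v,n) minus
    sum over edges (e, n - delta_e) with tail (t e, n) = (v, n). *)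
Definition is_cover_cycle (w : cover_chain) : Prop :=
  forall (v : vert G) (n : {ffun edge G -> int}),
    \sum_(e : edge G) (w e n *m resh S e v - w e (n - delta e) *m rest S e v) = 0.

Definition cover_nonzero (w : cover_chain) : Prop := exists e n, w e n != 0.

Definition supp_nonneg (w : cover_chain) : Prop :=
  forall e n, w e n != 0 -> forall x, (0 <= n x)%R.

Definition H1_cover_nonzero : Prop :=
  exists w : cover_chain, [/\ fin_supp w, is_cover_cycle w & cover_nonzero w].
End Twist.

(* Main.v *)
Require Import Defs.
From HB Require Import structures.
From mathcomp Require Import all_boot all_order all_algebra.
From mathcomp Require Import fraction generic_quotient zify.

Set Implicit Arguments. Unset Strict Implicit. Unset Printing Implicit Defensive.
Import Order.TTheory GRing.Theory Num.Theory.
Local Open Scope ring_scope.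
Local Open Scope quotient_scope.

Lemma fracE (R : idomainType) (x : {fraction R}) :
  exists a b : R, b != 0 /\ x = tofrac a / tofrac b.
Proof.
elim/quotW: x => r.
have d0 := denom_ratioP r.
exists (\n_r), (\d_r); split => //.
have hd : tofrac (\d_r) != 0 :> {fraction R} by rewrite tofrac_eq0.
apply: (canRL (mulfK hd)).
have -> : tofrac (\d_r) = \pi_({fraction R}) (Ratio (\d_r) 1) by unlock tofrac.
have -> : tofrac (\n_r) = \pi_({fraction R}) (Ratio (\n_r) 1) by unlock tofrac.
rewrite -[LHS]/(FracField.mul _ _) -FracField.pi_mul.
apply/eqmodP; rewrite /= FracField.equivfE /FracField.mulf !numden_Ratio ?oner_neq0 ?mulf_neq0 //.
  by rewrite !mulr1 mulrC.
  by rewrite oner_neq0. by rewrite oner_neq0.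
Qed.

Section MC.
Variable F : fieldType.

Fixpoint mcoef (k : nat) : mpoly F k -> {ffun 'I_k -> nat} -> F :=
  match k return mpoly F k -> {ffun 'I_k -> nat} -> F with
  | 0 => fun p _ => p
  | k'.+1 => fun p m => mcoef (p`_(m ord_max)) [ffun j => m (lift ord_max j)]
  end.

Definition mdec k (m : {ffun 'I_k -> nat}) i : {ffun 'I_k -> nat} :=
  [ffun j => if j == i then (m j).-1 else m j].

Lemma mcoef0 k m : mcoef (0 : mpoly F k) m = 0.
Proof. by elim: k m => [|k IH] m //=; rewrite coef0 IH. Qed.

Lemma mcoefD k (p q : mpoly F k) m : mcoef (p + q) m = mcoef p m + mcoef q m.
Proof. by elim: k p q m => [|k IH] p q m //=; rewrite coefD IH. Qed.

Lemma mcoefN k (p : mpoly F k) m : mcoef (- p) m = - mcoef p m.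
Proof. by elim: k p m => [|k IH] p m //=; rewrite coefN IH. Qed.

Lemma mcoefB k (p q : mpoly F k) m : mcoef (p - q) m = mcoef p m - mcoef q m.
Proof. by rewrite mcoefD mcoefN. Qed.

Lemma mcoef_sum k (I : finType) (f : I -> mpoly F k) m :
  mcoef (\sum_i f i) m = \sum_i mcoef (f i) m.
Proof. exact: (big_morph (fun p => mcoef p m) (fun p q => mcoefD p q m) (mcoef0 m)). Qed.

Lemma mcoef_const k c (p : mpoly F k) m : mcoef (mconst k c * p) m = c * mcoef p m.
Proof. by elim: k p m => [|k IH] p m //=; rewrite coefCM IH. Qed.

Lemma mcoef_var k i (p : mpoly F k) m :
  mcoef (mvar F i * p) m = if m i is 0%N then 0 else mcoef p (mdec m i).
Proof.
elim: k i p m => [|k IH] i p m; first by case: i.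
case: (unliftP ord_max i) => [j ->|->] /=.
  rewrite liftK coefCM IH ffunE.
  case E: (m (lift ord_max j)) => [|n]; first by [].
  congr mcoef; first by rewrite /mdec ffunE (negbTE (neq_lift _ _)).
  by apply/ffunP => j'; rewrite !ffunE (inj_eq (@lift_inj _ ord_max)).
rewrite unlift_none coefXM.
case E: (m ord_max) => [|n] /=; first exact: mcoef0.
rewrite /mdec ffunE eqxx E /=.
congr mcoef; apply/ffunP => j'; rewrite !ffunE.
by rewrite eq_sym (negbTE (neq_lift ord_max j')).
Qed.

Definition mext k (m : {ffun 'I_k -> nat}) (n : nat) : {ffun 'I_k.+1 -> nat} :=
  [ffun i => if unlift ord_max i is Some j then m j else n].

Lemma mcoef_nz k (p : mpoly F k) : p != 0 -> exists m, mcoef p m != 0.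
Proof.
elim: k p => [|k IH] p pn0; first by exists [ffun i => 0%N].
have : p`_(size p).-1 != 0 by rewrite -lead_coefE lead_coef_eq0.
move=> /IH [m' hm']; exists (mext m' (size p).-1) => /=.
rewrite /mext ffunE unlift_none.
by congr (_ != _): hm'; congr mcoef; apply/ffunP => j; rewrite !ffunE liftK.
Qed.

Fixpoint mbound (k : nat) : mpoly F k -> nat :=
  match k return mpoly F k -> nat with
  | 0 => fun _ => 0%N
  | k'.+1 => fun p => maxn (size p) (\max_(n < size p) mbound (p`_n))
  end.

Lemma mboundP k (p : mpoly F k) m : mcoef p m != 0 -> forall i, (m i < mbound p)%N.
Proof.
elim: k p m => [|k IH] p m /=; first by move=> _ [].
set n := m ord_max => hn.
have ns : (n < size p)%N.
  rewrite ltnNge; apply/negP => hs; move: hn; by rewrite nth_default // mcoef0 eqxx.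
move=> i; case: (unliftP ord_max i) => [j ->|->].
  have := IH _ _ hn j; rewrite ffunE => h.
  apply: (leq_trans h); apply: leq_trans (leq_maxr _ _).
  exact: (leq_bigmax_cond (Ordinal ns)).
by apply: leq_trans (leq_maxl _ _).
Qed.

Fixpoint mbuild (k : nat) : ({ffun 'I_k -> nat} -> F) -> nat -> mpoly F k :=
  match k return ({ffun 'I_k -> nat} -> F) -> nat -> mpoly F k with
  | 0 => fun c _ => c [ffun i => 0%N]
  | k'.+1 => fun c B => \poly_(n < B) mbuild (fun m => c (mext m n)) B
  end.

Lemma mbuildP k (c : {ffun 'I_k -> nat} -> F) B :
  (forall m, c m != 0 -> forall i, (m i < B)%N) ->
  forall m, mcoef (mbuild c B) m = c m.
Proof.
elim: k c => [|k IH] c hc m /=.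
  by congr c; apply/ffunP => -[].
rewrite coef_poly; case: ifP => hB.
  rewrite IH.
    congr c; apply/ffunP => i; rewrite !ffunE.
    by case: (unliftP ord_max i) => [j ->|->]; rewrite ?ffunE.
  move=> m' /hc h j; have := h (lift ord_max j).
  by rewrite ffunE liftK.
rewrite mcoef0; case: (eqVneq (c m) 0) => [->//|/hc/(_ ord_max)].
by rewrite hB.
Qed.
End MC.

Section Main.
Variables (F : fieldType) (G : digraph) (S : sheaf F G).
Local Notation N := #|edge G|.
Local Notation P := (mpoly F #|edge G|).
Local Notation Ec := (ecoord S).
Local Notation Vc := (vcoord S).

Definition rH (i : Ec) (j : Vc) : F := resh S (tag i) (tag j) (tagged i) (tagged j).
Definition rT (i : Ec) (j : Vc) : F := rest S (tag i) (tag j) (tagged i) (tagged j).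
Definition pA i j : P :=
  mconst N (rH i j) - mvar F (enum_rank (tag i)) * mconst N (rT i j).
Definition pcycle (p : Ec -> P) := forall j, \sum_i p i * pA i j = 0.

Lemma twE i j : twist_bd S (enum_rank i) (enum_rank j) = tofrac (pA i j).
Proof. by rewrite mxE !enum_rankK /iotaF /psi tofracB tofracM. Qed.

Lemma mulA_col (x : 'rV_#|{:Ec}|) j :
  (x *m twist_bd S) 0 (enum_rank j) = \sum_(i : Ec) x 0 (enum_rank i) * tofrac (pA i j).
Proof.
rewrite mxE (reindex enum_rank) /=; last exact: (onW_bij _ (@enum_rank_bij _)).
by apply: eq_bigr => i _; rewrite twE.
Qed.

Lemma K3 : h1_twist S != 0%N <->
  exists x : 'rV_#|{:Ec}|, x != 0 /\ x *m twist_bd S = 0.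
Proof.
split.
  rewrite /h1_twist mxrank_eq0 => hK.
  have [i hi] : exists i, row i (kermx (twist_bd S)) != 0.
    case/boolP: [exists i, row i (kermx (twist_bd S)) != 0] => [/existsP//|/existsPn H].
    exfalso; move/eqP: hK; apply.
    by apply/row_matrixP => i; have := H i; rewrite negbK => /eqP ->; rewrite row0.
  by exists (row i (kermx (twist_bd S))); rewrite -row_mul mulmx_ker row0.
case=> x [xn0 hx]; rewrite /h1_twist -lt0n.
have : (x <= kermx (twist_bd S))%MS by rewrite sub_kermx hx.
move/mxrankS; apply: leq_trans; by rewrite lt0n mxrank_eq0.
Qed.

Lemma K2 (p : Ec -> P) : (exists i, p i != 0) -> pcycle p ->
  exists x : 'rV_#|{:Ec}|, x != 0 /\ x *m twist_bd S = 0.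
Proof.
case=> i0 hi0 hp; exists (\row_k tofrac (p (enum_val k))); split.
  apply/eqP => /rowP /(_ (enum_rank i0)); rewrite !mxE enum_rankK => /eqP.
  by rewrite tofrac_eq0 (negbTE hi0).
apply/rowP => k; rewrite -(enum_valK k) mulA_col mxE.
rewrite (eq_bigr (fun i => tofrac (p i * pA i (enum_val k)))); last first.
  by move=> i _; rewrite mxE enum_rankK tofracM.
by rewrite -(big_morph _ (@tofracD _) (@tofrac0 _)) hp tofrac0.
Qed.

Lemma K1 (x : 'rV_#|{:Ec}|) : x != 0 -> x *m twist_bd S = 0 ->
  exists p : Ec -> P, (exists i, p i != 0) /\ pcycle p.
Proof.
move=> xn0 hx.
have : forall k : 'I_#|{:Ec}|, exists u : P * P, u.2 != 0 /\ x 0 k = tofrac u.1 / tofrac u.2.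
  by move=> k; have [a [b [hb ->]]] := fracE (x 0 k); exists (a, b).
case/fin_all_exists => u hu.
pose D := \prod_k (u k).2.
have Dn0 : D != 0 by apply/prodf_neq0 => k _; case: (hu k).
pose p i := (u (enum_rank i)).1 * \prod_(k | k != enum_rank i) (u k).2.
have hp i : tofrac (p i) = x 0 (enum_rank i) * tofrac D.
  have [hb ->] := hu (enum_rank i).
  rewrite /D (bigD1 (enum_rank i)) //= !tofracM.
  have : tofrac (u (enum_rank i)).2 != 0 :> {fraction P} by rewrite tofrac_eq0.
  by move=> hb2; rewrite mulrA divfK.
exists p; split.
  have [k hk] : exists k, x 0 k != 0.
    case/boolP: [exists k, x 0 k != 0] => [/existsP//|/existsPn H].
    exfalso; move/eqP: xn0; apply.
    by apply/rowP => k; have := H k; rewrite negbK => /eqP ->; rewrite mxE.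
  exists (enum_val k); rewrite -tofrac_eq0 hp enum_valK mulf_neq0 //.
  by rewrite tofrac_eq0.
move=> j; apply/eqP; rewrite -tofrac_eq0 (big_morph _ (@tofracD _) (@tofrac0 _)).
rewrite (eq_bigr (fun i => tofrac D * (x 0 (enum_rank i) * tofrac (pA i j)))); last first.
  by move=> i _; rewrite tofracM hp [x 0 _ * _]mulrC -mulrA.
by rewrite -mulr_sumr -mulA_col hx mxE mulr0.
Qed.

Definition nonneg (n : {ffun edge G -> int}) : bool := [forall x, (0 <= n x)%R].
Definition expo (n : {ffun edge G -> int}) : {ffun 'I_N -> nat} :=
  [ffun k => absz (n (enum_val k))].
Definition unexpo (m : {ffun 'I_N -> nat}) : {ffun edge G -> int} :=
  [ffun x => (m (enum_rank x))%:Z].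

Lemma expoK m : expo (unexpo m) = m.
Proof. by apply/ffunP => k; rewrite !ffunE enum_valK. Qed.

Lemma unexpoK n : nonneg n -> unexpo (expo n) = n.
Proof.
move/forallP => h; apply/ffunP => x; rewrite !ffunE enum_rankK.
exact: gez0_abs.
Qed.

Lemma unexpo_nonneg m : nonneg (unexpo m).
Proof. by apply/forallP => x; rewrite ffunE. Qed.

Lemma subdE (n : {ffun edge G -> int}) e x :
  (n - delta e) x = n x - ((x == e) : nat)%:Z.
Proof. by rewrite !ffunE. Qed.

Lemma nonneg_dec n e : ~~ nonneg n -> ~~ nonneg (n - delta e).
Proof.
move=> /forallPn [x hx]; apply/forallPn; exists x.
rewrite subdE -ltNge; rewrite -ltNge in hx.
apply: le_lt_trans hx; rewrite gerBl; by case: (x == e).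
Qed.

Lemma nonneg_dec0 (n : {ffun edge G -> int}) (e : edge G) : n e = 0 -> ~~ nonneg (n - delta e).
Proof. by move=> h; apply/forallPn; exists e; rewrite subdE h eqxx. Qed.

Lemma expo_dec n e k : nonneg n -> n e = k.+1%:Z ->
  nonneg (n - delta e) /\ expo (n - delta e) = mdec (expo n) (enum_rank e).
Proof.
move=> /forallP hn he; split.
  apply/forallP => x; rewrite subdE.
  have [->|nxe] := eqVneq x e; first by rewrite he.
  by rewrite subr0.
apply/ffunP => kk; rewrite !ffunE.
rewrite -(inj_eq (@enum_val_inj _ _)) enum_rankK.
have [->|nxe] := eqVneq (enum_val kk) e; last by rewrite subr0.
rewrite he; have -> : (k.+1%:Z - 1 = k%:Z)%R by rewrite -addn1 PoszD addrK.
by [].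
Qed.

Lemma dec_case (q : {ffun 'I_N -> nat} -> F) n e : nonneg n ->
  (if nonneg (n - delta e) then q (expo (n - delta e)) else 0) =
  (if expo n (enum_rank e) is 0%N then 0 else q (mdec (expo n) (enum_rank e))).
Proof.
move=> hn; rewrite ffunE enum_rankK.
have := forallP hn e; case E: (n e) => [[|k]|k] // _.
  by rewrite (negbTE (nonneg_dec0 E)).
by have [-> ->] := expo_dec hn E.
Qed.

Lemma pcol (p : Ec -> P) j m :
  mcoef (\sum_i p i * pA i j) m =
  \sum_i (mcoef (p i) m * rH i j -
     (if m (enum_rank (tag i)) is 0%N then 0
      else mcoef (p i) (mdec m (enum_rank (tag i)))) * rT i j).
Proof.
rewrite mcoef_sum; apply: eq_bigr => i _.
rewrite mulrBr mcoefB [p i * mconst _ _]mulrC mcoef_const mulrC.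
rewrite [p i * _]mulrCA mcoef_var.
case: (m _) => [|n]; first by rewrite mul0r.
by rewrite [p i * mconst _ _]mulrC mcoef_const [rT i j * _]mulrC.
Qed.

Lemma sum_sig (f : forall e, 'I_(dE S e) -> F) :
  \sum_(i : Ec) f (tag i) (tagged i) = \sum_e \sum_a f e a.
Proof. by rewrite (sig_big_dep xpredT (fun _ => xpredT) f). Qed.

Lemma cyc_col (w : cover_chain S) v n b :
  (\sum_e (w e n *m resh S e v - w e (n - delta e) *m rest S e v)) 0 b =
  \sum_(i : Ec) (w (tag i) n 0 (tagged i) * rH i (Tagged _ b)
     - w (tag i) (n - delta (tag i)) 0 (tagged i) * rT i (Tagged _ b)).
Proof.
rewrite summxE (sum_sig (fun e a => w e n 0 a * resh S e v a b
     - w e (n - delta e) 0 a * rest S e v a b)).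
apply: eq_bigr => e _; rewrite !mxE sumrB.
by congr (_ - _); apply: eq_bigr => a _; rewrite !mxE.
Qed.

Definition wp (p : Ec -> P) : cover_chain S := fun e n =>
  \row_a (if nonneg n then mcoef (p (Tagged (fun e => 'I_(dE S e)) a)) (expo n) else 0).

Lemma wpE p e n a : wp p e n 0 a =
  if nonneg n then mcoef (p (Tagged (fun e => 'I_(dE S e)) a)) (expo n) else 0.
Proof. by rewrite mxE. Qed.

Lemma W1 p : pcycle p -> is_cover_cycle (wp p).
Proof.
move=> hp v n; apply/rowP => b; rewrite cyc_col mxE.
case hn: (nonneg n).
  have := congr1 (fun q => mcoef q (expo n)) (hp (Tagged (fun v => 'I_(dV S v)) b)).
  rewrite /= pcol mcoef0 => h; apply: (etrans _ h); apply: eq_bigr => -[e a] _ /=.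
  rewrite !wpE hn.
  move: (dec_case (fun m => mcoef (p (Tagged (fun e => 'I_(dE S e)) a)) m) e hn) => /= ->.
  by [].
rewrite big1 // => -[e a] _ /=.
by rewrite !wpE hn (negbTE (nonneg_dec e (negbT hn))) !mul0r subr0.
Qed.

Lemma wp_nz p e n : wp p e n != 0 ->
  nonneg n /\ exists a : 'I_(dE S e), mcoef (p (Tagged (fun e => 'I_(dE S e)) a)) (expo n) != 0.
Proof.
move=> h; have [a ha] : exists a, wp p e n 0 a != 0.
  case/boolP: [exists a, wp p e n 0 a != 0] => [/existsP//|/existsPn H].
  exfalso; move/eqP: h; apply; apply/rowP => a.
  by have := H a; rewrite negbK => /eqP ->; rewrite mxE.
move: ha; rewrite wpE; case: ifP => [hn ha|_]; last by rewrite eqxx.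
split => //; by exists a.
Qed.

Lemma W4 p : supp_nonneg (wp p).
Proof. by move=> e n /wp_nz [/forallP h _] x; exact: h. Qed.

Lemma W3 p : (exists i, p i != 0) -> cover_nonzero (wp p).
Proof.
case=> -[e a] /mcoef_nz [m hm]; exists e, (unexpo m).
apply/negP => /eqP /rowP /(_ a); rewrite wpE mxE unexpo_nonneg expoK => /eqP.
by rewrite (negbTE hm).
Qed.

Lemma W2 p : fin_supp (wp p).
Proof.
pose B := \max_(i : Ec) mbound (p i).
pose g (f : {ffun edge G -> 'I_B.+1}) : {ffun edge G -> int} := [ffun x => (f x : nat)%:Z].
exists [seq (e, g f) | e <- enum (edge G), f <- enum {ffun edge G -> 'I_B.+1}].
move=> e n /wp_nz [hn [a ha]].
have hb : forall x, (absz (n x) < B.+1)%N.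
  move=> x; have := mboundP ha (enum_rank x); rewrite ffunE enum_rankK => h.
  rewrite ltnS; apply: leq_trans (ltnW h) _; exact: leq_bigmax.
have -> : n = g [ffun x => inord (absz (n x))].
  apply/ffunP => x; rewrite !ffunE inordK //; apply/esym/gez0_abs; exact: (forallP hn x).
by apply: allpairs_f; rewrite mem_enum.
Qed.

Lemma W5 : H1_cover_nonzero S -> exists p : Ec -> P, (exists i, p i != 0) /\ pcycle p.
Proof.
case=> w [[s hs] hw [e0 [n0 h0]]].
pose K := \max_(z <- s) \max_x absz (z.2 x).
have hK : forall e n, w e n != 0 -> forall x, (absz (n x) <= K)%N.
  move=> e n /hs hin x.
  apply: leq_trans (@leq_bigmax_seq _ s xpredT (fun z : edge G * {ffun edge G -> int} => \max_x absz (z.2 x)) _ hin isT).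
  exact: (@leq_bigmax _ (fun x => absz (n x)) x).
pose Kc : {ffun edge G -> int} := [ffun => K%:Z].
pose w' : cover_chain S := fun e n => w e (n - Kc).
have hw' : is_cover_cycle w'.
  move=> v n; rewrite /w'.
  under eq_bigr => e _ do rewrite [n - delta e - Kc]addrAC.
  exact: hw.
have hsup : forall e n, w' e n != 0 -> forall x, (0 <= n x)%R && (absz (n x) <= 2 * K)%N.
  move=> e n /hK h x; have := h x; rewrite !ffunE => hx.
  move: hx; rewrite -lez_nat abszE ler_norml => /andP [h1 h2].
  have hz0 : 0 <= n x by rewrite -(lerD2r (- (K%:Z))) add0r.
  rewrite -lez_nat abszE ler_norml hz0 /=; apply/andP; split.
    by apply: le_trans hz0; rewrite oppr_le0.
  by rewrite mul2n -addnn PoszD -lerBlDr.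
have hz : forall e n', ~~ nonneg n' -> w' e n' = 0.
  move=> e n' hn; apply/eqP; apply: contraNT hn => /hsup h.
  by apply/forallP => x; case/andP: (h x).
pose B := (2 * K).+1.
pose c (i : Ec) (m : {ffun 'I_N -> nat}) : F := w' (tag i) (unexpo m) 0 (tagged i).
pose p i := mbuild (c i) B.
have hc i m : c i m != 0 -> forall k, (m k < B)%N.
  move=> hcm k.
  have hw0 : w' (tag i) (unexpo m) != 0 by apply: contraNneq hcm => hh; rewrite /c hh mxE.
  have := hsup _ _ hw0 (enum_val k); rewrite ffunE enum_valK => /andP [_ h].
  by rewrite ltnS.
have hp i m : mcoef (p i) m = c i m := mbuildP (hc i) m.
exists p; split.
  pose n := n0 + Kc.
  have hwn : w' e0 n = w e0 n0 by rewrite /w' /n addrK.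
  have [a ha] : exists a, w e0 n0 0 a != 0.
    case/boolP: [exists a, w e0 n0 0 a != 0] => [/existsP//|/existsPn H].
    exfalso; move/eqP: h0; apply; apply/rowP => a.
    by have := H a; rewrite negbK => /eqP ->; rewrite mxE.
  have nn : nonneg n.
    have hw0 : w' e0 n != 0 by rewrite hwn h0.
    by apply/forallP => x; case/andP: (hsup _ _ hw0 x).
  exists (Tagged (fun e => 'I_(dE S e)) a); apply/eqP => hp0.
  have := hp (Tagged (fun e => 'I_(dE S e)) a) (expo n).
  rewrite hp0 mcoef0 /c /= unexpoK // hwn => /esym/eqP.
  by rewrite (negbTE ha).
move=> -[v b]; apply/eqP/negPn/negP => /mcoef_nz [m].
rewrite pcol.
have := congr1 (fun r : 'rV[F]_(dV S v) => r 0 b) (hw' v (unexpo m)); rewrite /= cyc_col mxE.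
move=> h hX; apply: (negP hX); apply/eqP.
apply: (etrans _ h); apply: eq_bigr => -[e a] _ /=.
rewrite !hp /c /=; congr (_ - _ * _).
case E: (m (enum_rank e)) => [|k].
  have : unexpo m e = 0 by rewrite ffunE E.
  by move/nonneg_dec0 => /hz ->; rewrite mxE.
have hE : unexpo m e = k.+1%:Z by rewrite ffunE E.
have [nn eq] := expo_dec (unexpo_nonneg m) hE.
by rewrite expoK in eq; rewrite -eq unexpoK.
Qed.

End Main.

Theorem lemma1 (F : fieldType) (G : digraph) (S : sheaf F G) :
  (h1_twist S <> 0%N <-> H1_cover_nonzero S) /\
  (h1_twist S <> 0%N ->
     exists w : cover_chain S,
       [/\ fin_supp w, is_cover_cycle w, cover_nonzero w & supp_nonneg w]).
Proof.
split; first split.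
- move=> /eqP /K3 [x [xn0 hx]]; have [p [pn hp]] := K1 xn0 hx.
  exists (wp p); split; [exact: W2 | exact: W1 | exact: W3].
- move=> /W5 [p [pn hp]]; apply/eqP/K3; exact: K2 pn hp.
- move=> /eqP /K3 [x [xn0 hx]]; have [p [pn hp]] := K1 xn0 hx.
  exists (wp p); split; [exact: W2 | exact: W1 | exact: W3 | exact: W4].
Qed.
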